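(* Suppose the second-order condition of the context holds with $\gamma_0>-1/2$ and the intermediate sequence $(k_n)$ satisfies $\Phi(k_n/n)=O(k_n^{-1/2})$. Let $W$, $Q_n$, $\tilde a$, $\tilde\Phi$ be as in the context, let $W_n(t)=k_n^{-1/2}W(k_nt)$ (a standard Brownian motion) and $$Y_n(t)=k_n^{1/2}\Big(\frac{Q_n(t)-Q_n(1)}{\tilde a(k_n/n)}-\frac{t^{-\gamma_0}-1}{\gamma_0}\Big).$$ Then for every $\varepsilon>0$, as $n\to\infty$, $$\sup_{0<t\le1}t^{\gamma_0+1/2+\varepsilon}\Big|Y_n(t)-\Big(W_n(1)-t^{-(\gamma_0+1)}W_n(t)+k_n^{1/2}\tilde\Phi\Big(\frac{k_n}{n}\Big)\Psi(t)\Big)\Big|=o_p(1).$$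
   Context: Let $X_1,X_2,\dots$ be i.i.d. with distribution function $F$, $F^{\leftarrow}$ its generalized inverse, $X_{1,n}\le\dots\le X_{n,n}$ the order statistics; $(k_n)$ is intermediate: $k_n\to\infty$, $k_n/n\to0$. Throughout, $(t^{-\gamma_0}-1)/\gamma_0$ is read as $-\log t$ when $\gamma_0=0$. Second-order condition: there exist $\gamma_0>-1/2$ and measurable, locally bounded $a,\Phi:(0,1)\to(0,\infty)$, $\Psi:(0,\infty)\to\mathbb R$ with $\lim_{t\downarrow0}\big[(F^{\leftarrow}(1-tx)-F^{\leftarrow}(1-t))/a(t)-(x^{-\gamma_0}-1)/\gamma_0\big]/\Phi(t)=\Psi(x)$ for all $x>0$, $x\mapsto\Psi(x)/(x^{-\gamma_0}-1)$ not constant, $\Phi$ eventually not changing sign, $\Phi(t)\to0$ as $t\downarrow0$. Construction (available under these assumptions): on a suitable probability space there are a standard Brownian motion $W$ and processes $Q_n$ such that for each $n$, $(Q_n(t))_{t\in[0,1]}$ has the same distribution as $(X_{n-[k_nt],n})_{t\in[0,1]}$, and there are functions with $\tilde a(k_n/n)=a(k_n/n)(1+o(\Phi(k_n/n)))$ and $\tilde\Phi(k_n/n)\sim\Phi(k_n/n)$ such that for all $\varepsilon>0$ $$\sup_{t\in(0,1]}t^{\gamma_0+1/2+\varepsilon}\Big|\frac{Q_n(t)-F^{\leftarrow}(1-k_n/n)}{\tilde a(k_n/n)}-\Big(\frac{t^{-\gamma_0}-1}{\gamma_0}-t^{-(\gamma_0+1)}\frac{W(k_nt)}{k_n}+\tilde\Phi\Big(\frac{k_n}{n}\Big)\Psi(t)\Big)\Big|=o_p(k_n^{-1/2})+o_p\Big(\tilde\Phi\Big(\frac{k_n}{n}\Big)\Big).$$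 *)

(* Defs.v *)
From HB Require Import structures.
From mathcomp Require Import all_boot all_order all_algebra.
From mathcomp Require Import all_classical all_reals all_analysis.
Import Order.TTheory GRing.Theory Num.Theory.
Import numFieldNormedType.Exports.
Local Open Scope classical_set_scope.
Local Open Scope ring_scope.

Section defs.
Context {R : realType}.

Definition hgam (g t : R) : R :=
  if g == 0 then - ln t else (powR t (- g) - 1) / g.

Definition Finv (F : R -> R) (p : R) : R := inf [set x | p <= F x].

(* j-th order statistic (1-indexed) X_{j,n} of the sample x 0, ..., x (n-1) *)
Definition ordstat (x : nat -> R) (n j : nat) : R :=
  nth 0 (sort <=%R [seq x i | i <- iota 0 n]) j.-1.

Definition intermediate (k : nat -> nat) : Prop :=
  (forall M : nat, \forall n \near \oo, (M <= k n)%N) /\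
  ((fun n : nat => (k n)%:R / n%:R : R) @ \oo --> (0 : R)).

Definition second_order (F : R -> R) (g : R) (a Phi Psi : R -> R) : Prop :=
  (forall t, 0 < t < 1 -> 0 < a t /\ 0 < Phi t) /\
  (measurable_fun (`]0, 1[ : set R) a /\ measurable_fun (`]0, 1[ : set R) Phi) /\
  (forall u v, 0 < u -> v < 1 -> exists M : R,
      forall t, u <= t <= v -> `|a t| <= M /\ `|Phi t| <= M) /\
  (forall x, 0 < x ->
     (fun t => ((Finv F (1 - t * x) - Finv F (1 - t)) / a t - hgam g x) / Phi t)
       @ 0^'+ --> Psi x) /\
  ~ (exists c : R, forall x, 0 < x -> x != 1 -> Psi x = c * hgam g x) /\
  (exists e : R, 0 < e /\ ((forall t, 0 < t < e -> 0 <= Phi t) \/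
                           (forall t, 0 < t < e -> Phi t <= 0))) /\
  Phi @ 0^'+ --> 0.

(* (X_i) are i.i.d. with distribution function F: joint cdf is the product *)
Definition iid_cdf {d} {T : measurableType d} (P : probability T R)
    (X : nat -> T -> R) (F : R -> R) : Prop :=
  (forall i, measurable_fun setT (X i)) /\
  forall (n : nat) (xs : nat -> R),
    P [set w | forall i, (i < n)%N -> X i w <= xs i] = (\prod_(i < n) F (xs i))%:E.

(* standard Brownian motion on [0, oo): W 0 = 0, continuous paths,
   independent centered Gaussian increments with variance t - s
   (joint law of increments given by its joint cdf) *)
Definition std_BM {d} {T : measurableType d} (P : probability T R)
    (W : R -> T -> R) : Prop :=
  [/\ (forall t, 0 <= t -> measurable_fun setT (W t)),
      (forall w, W 0 w = 0),
      (forall w, {within `[0, +oo[, continuous (fun t => W t w)})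
    & (forall (m : nat) (ts xs : nat -> R), ts 0%N = 0 ->
        (forall j, (j < m)%N -> ts j < ts j.+1) ->
        P [set w | forall j, (0 < j <= m)%N -> W (ts j) w - W (ts j.-1) w <= xs j]
        = (\prod_(1 <= j < m.+1)
             normal_prob 0 (Num.sqrt (ts j - ts j.-1)) `]-oo, xs j])%E)].

(* (Q t)_{t in [0,1]} (on P) has the same finite-dimensional distributions as
   (X_{n - [k t], n})_{t in [0,1]} (on P0) *)
Definition same_law_ordstat {d d0} {T : measurableType d} {T0 : measurableType d0}
    (P : probability T R) (Q : R -> T -> R)
    (P0 : probability T0 R) (X : nat -> T0 -> R) (n k : nat) : Prop :=
  forall (m : nat) (ts xs : nat -> R), (forall j, (j < m)%N -> 0 <= ts j <= 1) ->
    P [set w | forall j, (j < m)%N -> Q (ts j) w <= xs j] =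
    P0 [set w | forall j, (j < m)%N ->
                  ordstat (fun i => X i w) n (n - Num.truncn (k%:R * ts j)) <= xs j].

(* Z_n = o_p(r_n): for all delta, eta > 0, eventually the event
   {Z_n > delta r_n} has (outer) probability <= eta *)
Definition oP {d} {T : measurableType d} (P : probability T R)
    (Z : nat -> T -> \bar R) (r : nat -> R) : Prop :=
  forall delta eta : R, 0 < delta -> 0 < eta ->
    \forall n \near \oo, exists A : set T,
      [/\ measurable A, [set w | ((delta * r n)%:E < Z n w)%E] `<=` A
        & (P A <= eta%:E)%E].

Definition sup01 (f : R -> R) : \bar R :=
  ereal_sup [set (f t)%:E | t in [set t : R | 0 < t <= 1]].

End defs.

(* Main.v *)
Require Import Defs.
From HB Require Import structures.
From mathcomp Require Import all_boot all_order all_algebra.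
From mathcomp Require Import all_classical all_reals all_analysis.
From mathcomp Require Import ring lra.
Import Order.TTheory GRing.Theory Num.Theory.
Import numFieldNormedType.Exports.
Local Open Scope classical_set_scope.
Local Open Scope ring_scope.

Lemma hgam1 (R : realType) (g : R) : hgam g 1 = 0.
Proof. rewrite /hgam; case: ifP => _; by rewrite ?ln1 ?oppr0 ?powR1 ?subrr ?mul0r. Qed.

Lemma Psi1 (R : realType) (F : R -> R) g a Phi Psi :
  second_order F g a Phi Psi -> Psi 1 = 0.
Proof.
move=> [_ [_ [_ [H _]]]].
have := H 1 ltr01.
have -> : (fun t => ((Finv F (1 - t * 1) - Finv F (1 - t)) / a t - hgam g 1) / Phi t)
   = (fun=> 0 : R).
  by apply: funext => t; rewrite mulr1 subrr mul0r hgam1 subrr mul0r.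
move=> /cvg_unique; apply => //; exact: cvg_cst.
Qed.

Lemma ident (R : realType) (h1 p1 Psi1 s kk iA Fi Ph Qt Q1 Wt W1 Psit p hgt : R) :
  0 < s -> s * s = kk -> h1 = 0 -> p1 = 1 -> Psi1 = 0 ->
  s * ((Qt - Q1) * iA - hgt) - (s^-1 * W1 - p * (s^-1 * Wt) + s * Ph * Psit)
  = s * (((Qt - Fi) * iA - (hgt - p * (Wt / kk) + Ph * Psit))
       - ((Q1 - Fi) * iA - (h1 - p1 * (W1 / kk) + Ph * Psi1))).
Proof.
move=> s0 <- -> -> ->; have sn : s != 0 by rewrite gt_eqF.
by field.
Qed.

Lemma bound (R : realType) (c t s Dt D1 : R) : 0 < s -> 0 < t <= 1 -> 0 <= c ->
  powR t c * `|s * (Dt - D1)| <= s * (powR t c * `|Dt| + powR 1 c * `|D1|).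
Proof.
move=> s0 t01 c0; rewrite powR1 mul1r normrM (gtr0_norm s0) mulrCA ler_pM2l //.
have p1 : powR t c <= 1 by rewrite -(powRr0 t); apply: ger_powR.
have p0 : 0 <= powR t c by apply: powR_ge0.
apply: (le_trans (ler_wpM2l p0 (ler_normB _ _))).
rewrite mulrDr lerD2l -[X in _ <= X]mul1r; apply: ler_wpM2r => //.
Qed.
Theorem lemma3p1 (R : realType) (d0 : measure_display) (T0 : measurableType d0)
  (P0 : probability T0 R) (X : nat -> T0 -> R) (F : R -> R)
  (g : R) (a Phi Psi : R -> R) (k : nat -> nat)
  (d : measure_display) (T : measurableType d) (P : probability T R)
  (W : R -> T -> R) (Q : nat -> R -> T -> R) (atil Phitil : R -> R) :
  iid_cdf P0 X F ->
  - (1 / 2) < g ->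
  second_order F g a Phi Psi ->
  @intermediate R k ->
  (exists C : R, \forall n \near \oo,
      `|Phi ((k n)%:R / n%:R)| <= C * (Num.sqrt (k n)%:R)^-1) ->
  std_BM P W ->
  (forall n, forall t, 0 <= t <= 1 -> measurable_fun setT (Q n t)) ->
  (forall n, (k n < n)%N -> same_law_ordstat P (Q n) P0 X n (k n)) ->
  (fun n => (atil ((k n)%:R / n%:R) / a ((k n)%:R / n%:R) - 1)
              / Phi ((k n)%:R / n%:R)) @ \oo --> (0 : R) ->
  (fun n => Phitil ((k n)%:R / n%:R) / Phi ((k n)%:R / n%:R)) @ \oo --> (1 : R) ->
  (forall eps : R, 0 < eps ->
    oP P (fun n w => sup01 (fun t =>
        powR t (g + 1 / 2 + eps) *
        `| (Q n t w - Finv F (1 - (k n)%:R / n%:R)) / atil ((k n)%:R / n%:R)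
           - (hgam g t - powR t (- (g + 1)) * (W ((k n)%:R * t) w / (k n)%:R)
              + Phitil ((k n)%:R / n%:R) * Psi t) |))
      (fun n => (Num.sqrt (k n)%:R)^-1 + `|Phitil ((k n)%:R / n%:R)|)) ->
  forall eps : R, 0 < eps ->
    oP P (fun n w => sup01 (fun t =>
        let Wn := fun s => (Num.sqrt (k n)%:R)^-1 * W ((k n)%:R * s) w in
        let Yn := Num.sqrt (k n)%:R *
                  ((Q n t w - Q n 1 w) / atil ((k n)%:R / n%:R) - hgam g t) in
        powR t (g + 1 / 2 + eps) *
        `| Yn - (Wn 1 - powR t (- (g + 1)) * Wn t
                 + Num.sqrt (k n)%:R * Phitil ((k n)%:R / n%:R) * Psi t) |))
      (fun _ => 1).
Proof.
move=> _ hg hso hint [C hC] _ _ _ _ hPh H eps heps.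
have Ps1 := @Psi1 _ _ _ _ _ _ hso.
have c0 : 0 <= g + 1 / 2 + eps by lra.
have nearPh : \forall n \near \oo,
   `|Phitil ((k n)%:R / n%:R)| <= (3/2 * `|C|) * (Num.sqrt (k n)%:R)^-1.
  have h12 : 0 < 1/2 :> R by lra.
  have := cvgr_dist_lt _ _ hPh _ h12.
  move=> /(_ eventually_filter) hr0; apply: (filterS2 _ _ hC hr0) => n hn hr.
  set r := Phitil _ / Phi _ in hr.
  set ph := Phi _ in hn r hr.
  have rn0 : r != 0 by apply/eqP => r0; rewrite r0 subr0 normr1 in hr; lra.
  have ph0 : ph != 0 by apply/eqP => p0; rewrite /r p0 invr0 mulr0 eqxx in rn0.
  have -> : Phitil ((k n)%:R / n%:R) = r * ph by rewrite /r divfK.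
  rewrite normrM.
  have hr' : `|r| <= 3/2.
    have := ler_normD (r - 1) 1; rewrite subrK normr1 distrC; lra.
  have si0 : 0 <= (Num.sqrt (k n)%:R)^-1 :> R by rewrite invr_ge0 sqrtr_ge0.
  have hph : `|ph| <= `|C| * (Num.sqrt (k n)%:R)^-1.
    by apply: (le_trans hn); apply: ler_wpM2r => //; apply: ler_norm.
  by rewrite -mulrA; apply: ler_pM.
move=> delta eta hd he.
set K := 1 + 3/2 * `|C|.
have K0 : 0 < K by have := normr_ge0 C; rewrite /K; lra.
have hd' : 0 < delta / (2 * K) by apply: divr_gt0 => //; lra.
have HH := H eps heps _ eta hd' he.
apply: (filterS3 _ _ nearPh (proj1 hint 1%N) HH) => n hPn hk [A [mA sub PA]].
exists A; split => //.
move=> w /= hw; apply: sub => /=.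
have kk0 : 0 < (k n)%:R :> R by rewrite ltr0n.
set s := Num.sqrt (k n)%:R.
have s0 : 0 < s by rewrite sqrtr_gt0.
have ss : s * s = (k n)%:R by rewrite -expr2 sqr_sqrtr // ltW.
move: hw; rewrite /sup01 => /ereal_sup_gt [_ [t /= t01 <-]]; rewrite lte_fin.
rewrite (ident _ (hgam g 1) (powR 1 (-(g+1))) (Psi 1) _ _ _ (Finv F (1 - (k n)%:R / n%:R)) _ _ _ _ _ _ _ _ s0 ss (hgam1 _ g) ltac:(by rewrite powR1) Ps1).
move/lt_le_trans => /(_ _ (bound _ _ _ _ _ _ s0 t01 c0)).
set ft := _ * `|_|; set f1 := _ * `|_|.
move=> hlt.
have hlt' : delta / s < ft + f1 by rewrite ltr_pdivrMr // mulrC; lra.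
set si := s^-1 in hPn *.
have hb : delta / (2 * K) * (si + `|Phitil ((k n)%:R / n%:R)|) <= delta / s / 2.
  have h1 : si + `|Phitil ((k n)%:R / n%:R)| <= K * si by rewrite /K mulrDl mul1r; lra.
  apply: (le_trans (ler_wpM2l (ltW hd') h1)).
  rewrite /si le_eqVlt; apply/orP; left; apply/eqP.
  have sn : s != 0 by rewrite gt_eqF.
  have Kn : K != 0 by rewrite gt_eqF.
  clearbody K s; field; by rewrite sn Kn.
apply: (le_lt_trans (_ : (_ <= (delta / s / 2)%:E)%E)); first by rewrite lee_fin.
case: (ltrP (delta / s / 2) ft) => hft.
  apply: (lt_le_trans (_ : (_ < ft%:E)%E)); first by rewrite lte_fin.
  by apply: ereal_sup_ubound; exists t.
have hf1 : delta / s / 2 < f1 by lra.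
apply: (lt_le_trans (_ : (_ < f1%:E)%E)); first by rewrite lte_fin.
apply: ereal_sup_ubound; exists 1 => //=.
by rewrite lexx ltr01.
Qed.
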